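(* Every monotone $\upsilon$-quasi-lattice is a $\mu$-quasi-lattice, and its $\upsilon$-quasi-supremum and $\mu$-quasi-supremum of every pair $\{x,y\}$ coincide.
   Context: A pre-ordered Banach space is a real Banach space $X$ with a cone $X_+$ ($X_++X_+\subseteq X_+$, $\lambda X_+\subseteq X_+$ for $\lambda\ge0$); $x\le y$ means $y-x\in X_+$. $X$ is monotone if $0\le x\le y$ implies $\|x\|\le\|y\|$. For $A\subseteq X$, $\upsilon(A)$ is the set of upper bounds and $\mu(A)$ the set of minimal upper bounds ($z\in\upsilon(A)$ such that $A\le w\le z$ implies $w=z$). Let $\sigma_{x,y}(z)=\|z-x\|+\|z-y\|$. A pre-ordered Banach space with closed cone is a $\upsilon$-quasi-lattice (resp. $\mu$-quasi-lattice) if for all $x,y$ the set $\upsilon(\{x,y\})$ (resp. $\mu(\{x,y\})$) is non-empty and contains a unique minimizer of $\sigma_{x,y}$ on that set, called the $\upsilon$-quasi-supremum (resp. $\mu$-quasi-supremum) of $\{x,y\}$. *)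

(* Defs.v *)
From HB Require Import structures.
From mathcomp Require Import all_boot all_order all_algebra.
From mathcomp Require Import all_classical all_reals all_analysis.
Set Implicit Arguments. Unset Strict Implicit. Unset Printing Implicit Defensive.
Import Order.TTheory GRing.Theory Num.Theory.
Import numFieldNormedType.Exports.
Local Open Scope classical_set_scope.
Local Open Scope ring_scope.

(* A real Banach space is [V : completeNormedModType R] with [R : realType].
   A pre-order is given by a cone [C : set V]. *)

Definition is_cone (R : realType) (V : completeNormedModType R) (C : set V) : Prop :=
  (forall x y, C x -> C y -> C (x + y)) /\
  (forall (l : R) x, 0 <= l -> C x -> C (l *: x)).

Definition cle (R : realType) (V : completeNormedModType R) (C : set V) (x y : V) : Prop :=
  C (y - x).

Definition monotone_space (R : realType) (V : completeNormedModType R) (C : set V) : Prop :=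
  forall x y : V, cle C 0 x -> cle C x y -> `|x| <= `|y|.

Definition upper_bounds (R : realType) (V : completeNormedModType R) (C : set V) (A : set V) : set V :=
  [set z | forall a, A a -> cle C a z].

Definition min_upper_bounds (R : realType) (V : completeNormedModType R) (C : set V) (A : set V) : set V :=
  [set z | upper_bounds C A z /\
           (forall w, upper_bounds C A w -> cle C w z -> w = z)].

Definition sigma_xy (R : realType) (V : completeNormedModType R) (x y z : V) : R :=
  `|z - x| + `|z - y|.

Definition is_sigma_min (R : realType) (V : completeNormedModType R) (S : set V) (x y z : V) : Prop :=
  S z /\ (forall w, S w -> sigma_xy x y z <= sigma_xy x y w).

Definition has_unique_sigma_min (R : realType) (V : completeNormedModType R) (S : set V) (x y : V) : Prop :=
  (exists z, S z) /\ (exists z, is_sigma_min S x y z /\ forall z', is_sigma_min S x y z' -> z' = z).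

Definition upsilon_quasi_lattice (R : realType) (V : completeNormedModType R) (C : set V) : Prop :=
  is_cone C /\ closed C /\
  forall x y : V, has_unique_sigma_min (upper_bounds C [set x; y]) x y.

Definition mu_quasi_lattice (R : realType) (V : completeNormedModType R) (C : set V) : Prop :=
  is_cone C /\ closed C /\
  forall x y : V, has_unique_sigma_min (min_upper_bounds C [set x; y]) x y.

(* The upsilon-quasi-supremum (resp. mu-quasi-supremum) of {x,y} is the
   unique minimizer; in a quasi-lattice, [is_sigma_min] characterizes it. *)
Definition upsilon_qsup (R : realType) (V : completeNormedModType R) (C : set V) (x y z : V) : Prop :=
  is_sigma_min (upper_bounds C [set x; y]) x y z.

Definition mu_qsup (R : realType) (V : completeNormedModType R) (C : set V) (x y z : V) : Prop :=
  is_sigma_min (min_upper_bounds C [set x; y]) x y z.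

(* Main.v *)
Require Import Defs.
From HB Require Import structures.
From mathcomp Require Import all_boot all_order all_algebra.
From mathcomp Require Import all_classical all_reals all_analysis.
Set Implicit Arguments. Unset Strict Implicit.
Import Order.TTheory GRing.Theory Num.Theory.
Local Open Scope classical_set_scope.
Local Open Scope ring_scope.

Lemma mono_dist (R : realType) (V : completeNormedModType R) (C : set V) x w z :
  monotone_space C -> cle C x w -> cle C w z -> `|w - x| <= `|z - x|.
Proof.
move=> M hxw hwz; apply: M; rewrite /cle.
  by rewrite subr0.
have -> : z - x - (w - x) = z - w by rewrite opprB addrA subrK.
exact: hwz.
Qed.

Lemma ub2 (R : realType) (V : completeNormedModType R) (C : set V) x y w :
  upper_bounds C [set x; y] w -> cle C x w /\ cle C y w.
Proof. by move=> h; split; apply: h; [left|right]. Qed.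

Lemma key (R : realType) (V : completeNormedModType R) (C : set V) x y z0 :
  monotone_space C ->
  is_sigma_min (upper_bounds C [set x; y]) x y z0 ->
  (forall z', is_sigma_min (upper_bounds C [set x; y]) x y z' -> z' = z0) ->
  min_upper_bounds C [set x; y] z0.
Proof.
move=> M [Hz0 Hmin] Hu; split => // w Hw Hwz.
apply: Hu; split => // v Hv.
apply: le_trans (Hmin _ Hv).
have [hx hy] := (ub2 Hw).
rewrite /sigma_xy; have := mono_dist M hx Hwz. have := mono_dist M hy Hwz. move=> a b. exact: lerD b a.
Qed.

Theorem theorem5p12 (R : realType) (V : completeNormedModType R) (C : set V) :
  upsilon_quasi_lattice C -> monotone_space C ->
  mu_quasi_lattice C /\
  (forall x y z : V, upsilon_qsup C x y z <-> mu_qsup C x y z).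
Proof.
move=> [Hc [Hcl Hq]] M.
have H : forall x y, exists z0,
   min_upper_bounds C [set x; y] z0 /\
   is_sigma_min (upper_bounds C [set x; y]) x y z0 /\
   (forall z, is_sigma_min (min_upper_bounds C [set x; y]) x y z -> z = z0) /\
   (forall z, is_sigma_min (upper_bounds C [set x; y]) x y z -> z = z0).
  move=> x y; have [_ [z0 [Hm Hu]]] := Hq x y.
  have Hmu := key M Hm Hu.
  exists z0; split => //; split => //; split => // z [Hz Hzm].
  apply: Hu; split; first by case: Hz.
  move=> v Hv; apply: le_trans (Hzm _ Hmu) (proj2 Hm v Hv).
split.
  split => //; split => // x y.
  have [z0 [Hmu [Hm [Hu1 _]]]] := H x y.
  split; first by exists z0.
  exists z0; split => //; split => // v [Hv _]; exact: (proj2 Hm v Hv).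
move=> x y z; have [z0 [Hmu [Hm [Hu1 Hu2]]]] := H x y.
rewrite /upsilon_qsup /mu_qsup; split => Hz.
  rewrite (Hu2 _ Hz); split => // v [Hv _]; exact: (proj2 Hm v Hv).
by rewrite (Hu1 _ Hz).
Qed.
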